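(* Let $N\in\mathbb N$ and let $f\in R_J(N)$ be nonzero. Then every extreme point of $\nu_J(f)$ lies in $\operatorname{supp}(f)$, and $$\nu_J(f)=\operatorname{Closure}_{\mathbb R^2}\bigl(\operatorname{conv}(\operatorname{supp}(f);\vec A)\bigr)=\operatorname{conv}(\operatorname{supp}(f);\vec A).$$
   Context: $R(N)=\mathbb C[\zeta^{1/N},\zeta^{-1/N}]((q^{1/N}))$ is the ring of formal series $f=\sum_{n,r\in\frac1N\mathbb Z}c(n,r)q^n\zeta^r$ such that for each $n$ only finitely many $r$ have $c(n,r)\ne0$ and $n$ is bounded below on the support $\operatorname{supp}(f)=\{(n,r): c(n,r)\neq0\}$. $R_J(N)$ is the set of $f\in R(N)$ for which there exist $a>0$ and $b,c\in\mathbb R$ with $\operatorname{supp}(f)\subseteq\{(n,r)\in\mathbb R^2: n\ge ar^2+br+c\}$. Let $\vec A=\{(1,0)\}\subset\mathbb R^2$ (the direction of the ray $[0,\infty)\times\{0\}$). For $P\subseteq\mathbb R^2$, $\operatorname{conv}(P;\vec A)=\operatorname{conv}(P)+[0,\infty)\times\{0\}$, i.e. all $\sum_i\alpha_ip_i+\beta(1,0)$ with $p_i\in P$, $\alpha_i\ge0$, $\sum\alpha_i=1$, $\beta\ge0$ (finite sums). The Jacobi valuation is $\nu_J(f)=\operatorname{Closure}_{\mathbb R^2}(\operatorname{conv}(\operatorname{supp}(f);\vec A))$. An extreme point of a convex set $C$ is a point of $C$ not in the relative interior of any line segment contained in $C$. *)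

(* Defs.v *)
From HB Require Import structures.
From mathcomp Require Import all_boot all_order all_algebra.
From mathcomp Require Import complex.
From mathcomp Require Import all_classical all_reals all_analysis.
Set Implicit Arguments. Unset Strict Implicit. Unset Printing Implicit Defensive.
Import Order.TTheory GRing.Theory Num.Theory.
Import numFieldNormedType.Exports.
Local Open Scope classical_set_scope.
Local Open Scope ring_scope.

(* An element f of R(N) = C[zeta^{1/N},zeta^{-1/N}]((q^{1/N})) is encoded by its
   coefficient function: c a b is the coefficient of q^{a/N} zeta^{b/N}
   (a b : int); C is modelled as the complex numbers R[i] over R : realType. *)
Definition coeffs (R : realType) := int -> int -> R[i].

Definition in_RN (R : realType) (f : coeffs R) : Prop :=
  (forall a : int, finite_set [set b : int | f a b != 0]) /\
  (exists m : int, forall a b : int, f a b != 0 -> m <= a).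

Definition supp (R : realType) (N : nat) (f : coeffs R) : set (R * R) :=
  [set p | exists a b : int,
     p = ((a%:~R / N%:R : R), (b%:~R / N%:R : R)) /\ f a b != 0].

Definition in_RJ (R : realType) (N : nat) (f : coeffs R) : Prop :=
  in_RN f /\
  exists (a b c : R), 0 < a /\
    supp N f `<=` [set p | a * p.2 ^+ 2 + b * p.2 + c <= p.1].

(* conv(P; A) with A = {(1,0)}: finite convex combinations of points of P
   plus beta (1,0), beta >= 0 *)
Definition conv_dir (R : realType) (P : set (R * R)) : set (R * R) :=
  [set x | exists (k : nat) (p : 'I_k -> R * R) (alpha : 'I_k -> R) (beta : R),
     [/\ (forall i, P (p i)), (forall i, 0 <= alpha i),
         \sum_(i < k) alpha i = 1, 0 <= beta &
         x = (\sum_(i < k) alpha i * (p i).1 + beta,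
              \sum_(i < k) alpha i * (p i).2)]].

Definition nuJ (R : realType) (N : nat) (f : coeffs R) : set (R * R) :=
  closure (conv_dir (supp N f)).

Definition segpt (R : realType) (y z : R * R) (t : R) : R * R :=
  ((1 - t) * y.1 + t * z.1, (1 - t) * y.2 + t * z.2).

Definition extreme_point (R : realType) (C : set (R * R)) (x : R * R) : Prop :=
  C x /\
  forall y z : R * R, y <> z ->
    (forall t : R, 0 <= t <= 1 -> C (segpt y z t)) ->
    forall t : R, 0 < t < 1 -> x <> segpt y z t.

(* Main.v *)
Require Import Defs.
From HB Require Import structures.
From mathcomp Require Import all_boot all_order all_algebra.
From mathcomp Require Import complex.
From mathcomp Require Import all_classical all_reals all_analysis.
From mathcomp Require Import lra ring zify.
Import Order.TTheory GRing.Theory Num.Theory.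
Import numFieldNormedType.Exports.
Local Open Scope classical_set_scope.
Local Open Scope ring_scope.
Definition rep (R : realType) k (p : 'I_k -> R * R) (al : 'I_k -> R) (be : R) : R * R :=
  (\sum_(i < k) al i * (p i).1 + be, \sum_(i < k) al i * (p i).2).
Arguments rep {R k}.

Lemma segpt_rep (R : realType) k (p : 'I_k -> R * R) al al' (be be' t : R) :
  segpt (rep p al be) (rep p al' be') t =
  rep p (fun i => (1 - t) * al i + t * al' i) ((1 - t) * be + t * be').
Proof.
rewrite /segpt /rep /=; congr pair.
  have -> : \sum_(i < k) ((1 - t) * al i + t * al' i) * (p i).1 =
     (1 - t) * \sum_(i < k) al i * (p i).1 + t * \sum_(i < k) al' i * (p i).1.
    by rewrite !mulr_sumr -big_split; apply: eq_bigr => i _ /=; ring.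
  ring.
have -> : \sum_(i < k) ((1 - t) * al i + t * al' i) * (p i).2 =
     (1 - t) * \sum_(i < k) al i * (p i).2 + t * \sum_(i < k) al' i * (p i).2.
  by rewrite !mulr_sumr -big_split; apply: eq_bigr => i _ /=; ring.
ring.
Qed.

Lemma closed_hp (R : realType) (u v w : R) :
  closed [set y : R * R | 0 <= u * y.1 + v * y.2 + w].
Proof.
have -> : [set y : R * R | 0 <= u * y.1 + v * y.2 + w] =
  (fun y : R * R => u * y.1 + v * y.2 + w) @^-1` [set r | 0 <= r] by [].
apply: preimage_closed; last exact: closed_ge.
move=> y _.
have h1 : {for y, continuous (fun y : R * R => y.1)} by exact: cvg_fst.
have h2 : {for y, continuous (fun y : R * R => y.2)} by exact: cvg_snd.
have c : forall k : R, {for y, continuous (fun _ : R * R => k)}.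
  by move=> k; exact: cst_continuous.
have m1 := continuousM (c u) h1.
have m2 := continuousM (c v) h2.
have a1 := continuousD m1 m2.
exact: (continuousD a1 (c w)).
Qed.

Lemma hp_conv (R : realType) (P : set (R * R)) (u v w : R) : 0 <= u ->
  (forall s, P s -> 0 <= u * s.1 + v * s.2 + w) ->
  forall y, conv_dir P y -> 0 <= u * y.1 + v * y.2 + w.
Proof.
move=> u0 H y [k [p [al [be [Pp al0 s1 be0 ->]]]]] /=.
have E : \sum_(i < k) al i * (u * (p i).1 + v * (p i).2 + w) =
   u * \sum_(i < k) al i * (p i).1 + v * \sum_(i < k) al i * (p i).2 + w * \sum_(i < k) al i.
  by rewrite !mulr_sumr -!big_split; apply: eq_bigr => i _ /=; ring.
rewrite s1 mulr1 in E.
have h1 : 0 <= \sum_(i < k) al i * (u * (p i).1 + v * (p i).2 + w).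
  by apply: sumr_ge0 => i _; apply: mulr_ge0 => //; apply: H.
have h2 : 0 <= u * be by apply: mulr_ge0.
lra.
Qed.

Lemma hp_closure (R : realType) (P : set (R * R)) (u v w : R) : 0 <= u ->
  (forall s, P s -> 0 <= u * s.1 + v * s.2 + w) ->
  forall y, closure (conv_dir P) y -> 0 <= u * y.1 + v * y.2 + w.
Proof.
move=> u0 H y cy.
have := closureS (@hp_conv R P u v w u0 H) cy.
by rewrite -(proj1 (closure_id _) (@closed_hp R u v w)).
Qed.
Arguments hp_closure {R P u v w}.

Lemma seq_min (T : eqType) (R : realType) (g : T -> R) (s : seq T) :
  s != [::] -> exists a, a \in s /\ forall b, b \in s -> g a <= g b.
Proof.
elim: s => [//|x s IH] _.
case: (eqVneq s [::]) => [->|sn].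
  by exists x; split; [rewrite inE eqxx | move=> b; rewrite inE => /eqP ->].
have [a [ain amin]] := IH sn.
case: (leP (g x) (g a)) => h.
  exists x; split; first by rewrite inE eqxx.
  move=> b; rewrite inE => /orP[/eqP ->//|bs]; exact: le_trans h (amin _ bs).
exists a; split; first by rewrite inE ain orbT.
move=> b; rewrite inE => /orP[/eqP ->|bs]; [exact: ltW | exact: amin].
Qed.

Lemma finite_min (T : eqType) (R : realType) (A : set T) (g : T -> R) :
  finite_set A -> A !=set0 -> exists a, A a /\ forall b, A b -> g a <= g b.
Proof.
move=> /finite_seqP[s ->] [x xs].
have sn : s != [::] by case: s xs.
have [a [ain amin]] := @seq_min T R g s sn.
by exists a; split => // b bs; apply: amin.
Qed.

Lemma finite_intbox (M : nat) : finite_set [set k : int | (absz k <= M)%N].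
Proof.
apply/finite_seqP.
pose s0 := [seq (n%:Z - M%:Z) | n <- iota 0 (2 * M).+1].
exists s0.
apply/seteqP; split => k /=.
  move=> hk; rewrite /s0; apply/mapP; exists (absz (k + M%:Z)); first by rewrite mem_iota; lia.
  lia.
by rewrite /s0 => /mapP [n]; rewrite mem_iota => hn ->; lia.
Qed.
Lemma lem_div (R : realType) (d X Y Z : R) :
  0 < d -> d <= X -> 0 <= Z -> X * Y <= Z -> Y <= Z / d.
Proof.
move=> d0 dX Z0 h; rewrite ler_pdivlMr //.
case: (leP 0 Y) => hY; last by nra.
nra.
Qed.

Lemma lem2 (R : realType) (d X Y Z : R) :
  0 < d -> d <= X -> 0 <= Z -> Y <= Z -> Y / X <= Z / d.
Proof.
move=> d0 dX Z0 h; have X0 : 0 < X by lra.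
rewrite ler_pdivrMr // mulrAC ler_pdivlMr //.
nra.
Qed.

Lemma divle (R : realType) (A B X Y : R) :
  0 < X -> 0 < Y -> A * Y <= B * X -> A / X <= B / Y.
Proof.
move=> X0 Y0 h; rewrite ler_pdivrMr // mulrAC ler_pdivlMr //.
Qed.

Lemma parab_lb (R : realType) (a b c r : R) :
  0 < a -> c - b ^+ 2 / (4 * a) <= a * r ^+ 2 + b * r + c.
Proof.
move=> a0.
have -> : a * r ^+ 2 + b * r + c = c - b ^+ 2 / (4 * a) + (2 * a * r + b) ^+ 2 / (4 * a).
  by field; lra.
rewrite lerDl; apply: divr_ge0; [exact: sqr_ge0 | lra].
Qed.
Arguments lem_div {R d X Y Z}.
Arguments lem2 {R d X Y Z}.
Arguments divle {R A B X Y}.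
Arguments parab_lb {R} a b c r.

Lemma slope_lemma (R : realType) (S : set (R * R)) (r0 mu K0 d : R) :
  0 < d -> K0 <= mu ->
  (forall s, S s -> K0 <= s.1) ->
  (forall s, S s -> (s.2 < r0 -> s.2 + d <= r0) /\ (r0 < s.2 -> r0 + d <= s.2)) ->
  (forall s, S s -> s.2 = r0 -> mu <= s.1) ->
  (forall p q, S p -> S q -> p.2 < r0 -> r0 < q.2 ->
     mu * (q.2 - p.2) <= (q.2 - r0) * p.1 + (r0 - p.2) * q.1) ->
  exists sigma, forall s, S s -> 0 <= 1 * s.1 + (- sigma) * s.2 + (sigma * r0 - mu).
Proof.
move=> d0 muK HK Hd Heq Hpair.
pose Aset := [set t | exists s, [/\ S s, s.2 < r0 & t = (mu - s.1) / (r0 - s.2)]].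
pose L0 := (K0 - mu) / d.
pose Ast := Aset `|` [set L0].
exists (sup Ast).
have L0e : L0 = - ((mu - K0) / d) by rewrite /L0 -mulNr opprB.
have mKd : 0 <= (mu - K0) / d by apply: divr_ge0; lra.
have hsup : has_sup Ast.
  split; first by exists L0; right.
  exists ((mu - K0) / d) => t [[s [Ss hs ->]]|->]; last by rewrite L0e; lra.
  apply: (lem2 d0); [|lra|have := HK _ Ss; lra].
  have := proj1 (Hd s Ss) hs; lra.
move=> s Ss; case: (ltgtP s.2 r0) => h.
- pose as_ := (mu - s.1) / (r0 - s.2).
  have h1 : as_ <= sup Ast by apply: sup_upper_bound => //; left; exists s.
  have h2 : as_ * (r0 - s.2) = mu - s.1 by rewrite /as_ divfK //; lra.
  have h3 : 0 <= (sup Ast - as_) * (r0 - s.2) by apply: mulr_ge0; lra.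
  move: h1 h2 h3; generalize (sup Ast) as_ => sg A1 h1 h2 h3.
  lra.
- pose bs := (s.1 - mu) / (s.2 - r0).
  have h1 : sup Ast <= bs.
    apply: ge_sup; first by exists L0; right.
    move=> t [[s' [Ss' hs' ->]]|->].
      apply: divle; [lra|lra|].
      have := Hpair s' s Ss' Ss hs' h.
      lra.
    have : (mu - s.1) / (s.2 - r0) <= (mu - K0) / d.
      apply: (lem2 d0); [|lra|have := HK _ Ss; lra].
      have := proj2 (Hd s Ss) h; lra.
    have -> : (mu - s.1) / (s.2 - r0) = - bs by rewrite /bs -mulNr opprB.
    rewrite L0e; lra.
  have h2 : bs * (s.2 - r0) = s.1 - mu by rewrite /bs divfK //; lra.
  have h3 : 0 <= (bs - sup Ast) * (s.2 - r0) by apply: mulr_ge0; lra.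
  move: h1 h2 h3; generalize (sup Ast) bs => sg B1 h1 h2 h3.
  lra.
- have := Heq s Ss h; rewrite h; lra.
Qed.
Lemma rep_lemma (R : realType) (S : set (R * R)) (p q : R * R) (r0 n0 mu : R) :
  S p -> S q -> ((p.2 < r0 /\ r0 < q.2) \/ (p = q /\ p.2 = r0)) ->
  mu = (if p.2 < r0 then ((q.2 - r0) * p.1 + (r0 - p.2) * q.1) / (q.2 - p.2) else p.1) ->
  mu <= n0 -> conv_dir S (n0, r0).
Proof.
move=> Sp Sq hpq -> hmu.
pose w1 := if p.2 < r0 then (q.2 - r0) / (q.2 - p.2) else 1.
have hw : 0 <= w1 <= 1.
  rewrite /w1; case: ifP => h; last by rewrite ler01 lexx.
  have hq : r0 < q.2 by case: hpq => [[]|[_ e]] //; move: h; rewrite e ltxx.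
  apply/andP; split; first by apply: divr_ge0; lra.
  by rewrite ler_pdivrMr; lra.
exists 2%N, (fun i : 'I_2 => if i == ord0 then p else q),
  (fun i : 'I_2 => if i == ord0 then w1 else 1 - w1),
  (n0 - (if p.2 < r0 then ((q.2 - r0) * p.1 + (r0 - p.2) * q.1) / (q.2 - p.2) else p.1)).
split.
- by move=> i; case: ifP.
- by move=> i; case: ifP; lra.
- rewrite !big_ord_recl big_ord0 /=; lra.
- lra.
rewrite !big_ord_recl !big_ord0 /=.
rewrite /w1; case: ifP => h.
  have hq : r0 < q.2 by case: hpq => [[]|[_ e]] //; move: h; rewrite e ltxx.
  congr pair; field; lra.
have e : p.2 = r0 by case: hpq => [[h1 _]|[_ e]] //; move: h; rewrite h1.
congr pair; rewrite ?e; ring.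
Qed.

Arguments slope_lemma {R S r0 mu K0 d}.
Arguments rep_lemma {R S p q r0 n0 mu}.
Lemma closed_main (R : realType) (S : set (R * R)) (a b c : R) :
  0 < a -> (forall s, S s -> a * s.2 ^+ 2 + b * s.2 + c <= s.1) ->
  (forall r0 : R, exists2 d : R, 0 < d & forall s, S s ->
      (s.2 < r0 -> s.2 + d <= r0) /\ (r0 < s.2 -> r0 + d <= s.2)) ->
  (forall B : R, finite_set [set s | S s /\ s.1 <= B /\ `|s.2| <= B]) ->
  closure (conv_dir S) `<=` conv_dir S.
Proof.
move=> a0 HP HL HF x cx.
set r0 := x.2; set n0 := x.1.
have [d d0 Hd] := HL r0.
pose P (r : R) := a * r ^+ 2 + b * r + c.
pose K0 := c - b ^+ 2 / (4 * a).
have PK : forall r, K0 <= P r by move=> r; exact: parab_lb.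
have HK : forall s, S s -> K0 <= s.1 by move=> s Ss; exact: le_trans (PK _) (HP _ Ss).
have [sl [Ssl hsl]] : exists sl, S sl /\ sl.2 <= r0.
  apply: contrapT => hn.
  have H : forall s, S s -> 0 <= 0 * s.1 + 1 * s.2 + (- (r0 + d)).
    move=> s Ss; case: (leP s.2 r0) => h; first by exfalso; apply: hn; exists s.
    have := proj2 (Hd s Ss) h; lra.
  have := hp_closure (lexx 0) H _ cx; rewrite -/r0; lra.
have [sr [Ssr hsr]] : exists sr, S sr /\ r0 <= sr.2.
  apply: contrapT => hn.
  have H : forall s, S s -> 0 <= 0 * s.1 + (-1) * s.2 + (r0 - d).
    move=> s Ss; case: (leP r0 s.2) => h; first by exfalso; apply: hn; exists s.
    have := proj1 (Hd s Ss) h; lra.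
  have := hp_closure (lexx 0) H _ cx; rewrite -/r0; lra.
pose adm (pi : (R * R) * (R * R)) :=
  [/\ S pi.1, S pi.2 & (pi.1.2 < r0 /\ r0 < pi.2.2) \/ (pi.1 = pi.2 /\ pi.1.2 = r0)].
pose V (pi : (R * R) * (R * R)) :=
  if pi.1.2 < r0 then ((pi.2.2 - r0) * pi.1.1 + (r0 - pi.1.2) * pi.2.1) / (pi.2.2 - pi.1.2)
  else pi.1.1.
have chord : forall pi, adm pi -> P r0 + a * ((r0 - pi.1.2) * (pi.2.2 - r0)) <= V pi.
  move=> [p q] [/= Sp Sq [[hu hv]|[epq hu]]]; rewrite /V /=.
    rewrite hu ler_pdivlMr; last lra.
    have h1 := HP _ Sp; have h2 := HP _ Sq.
    have e1 : 0 <= (q.2 - r0) * (p.1 - P p.2) by apply: mulr_ge0; rewrite /P; lra.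
    have e2 : 0 <= (r0 - p.2) * (q.1 - P q.2) by apply: mulr_ge0; rewrite /P; lra.
    rewrite /P in e1 e2 *.
    nra.
  rewrite hu ltxx subrr mul0r mulr0 addr0 -hu; exact: HP.
have admprod : forall pi, adm pi -> 0 <= (r0 - pi.1.2) * (pi.2.2 - r0).
  move=> [p q] [/= _ _ [[hu hv]|[_ hu]]]; first by apply: mulr_ge0; lra.
  by rewrite hu subrr mul0r.
have [pi0 adm0] : exists pi, adm pi.
  case: (eqVneq sl.2 r0) => e1.
    by exists (sl, sl); split => //; right.
  case: (eqVneq sr.2 r0) => e2.
    by exists (sr, sr); split => //; right.
  exists (sl, sr); split => //; left; split => /=.
    by rewrite lt_neqAle e1.
  by rewrite lt_neqAle eq_sym e2.
set V0 := V pi0.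
have V0P : P r0 <= V0.
  have h1 := chord _ adm0; have h2 := admprod _ adm0; rewrite -/V0 in h1.
  have : 0 <= a * ((r0 - pi0.1.2) * (pi0.2.2 - r0)) by apply: mulr_ge0 => //; lra.
  lra.
set E := (V0 - P r0) / a.
have E0 : 0 <= E by apply: divr_ge0; lra.
have V0K : K0 <= V0 by exact: le_trans (PK _) V0P.
pose B := `|r0| + E / d + `|V0| + (V0 - K0) * (E / d) / d.
pose box (s : R * R) := S s /\ s.1 <= B /\ `|s.2| <= B.
have Ed0 : 0 <= E / d by apply: divr_ge0 => //; lra.
have W0 : 0 <= (V0 - K0) * (E / d) / d.
  by apply: divr_ge0; [apply: mulr_ge0 => //; lra | lra].
have nr0 := ler_norm r0; have nr1 : - `|r0| <= r0 by rewrite lerNl; have := ler_norm (- r0); rewrite normrN.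
have nV0 := ler_norm V0.
have nV1 := normr_ge0 V0.
have bound : forall pi, adm pi -> V pi <= V0 -> box pi.1 /\ box pi.2.
  move=> [p q] [/= Sp Sq [[hu hv]|[epq hu]]]; rewrite /V /=; last first.
    rewrite hu ltxx => hV; rewrite -epq; have hb : box p.
      split => //; split; first by rewrite /B; lra.
      by rewrite hu /B; lra.
    by [].
  rewrite hu => hV.
  have hu' := proj1 (Hd p Sp) hu; have hv' := proj2 (Hd q Sq) hv.
  have hch := chord (p, q); rewrite /V /= hu in hch.
  have hch' := hch (And3 Sp Sq (or_introl (conj hu hv))).
  have hX : (r0 - p.2) * (q.2 - r0) <= E.
    rewrite /E ler_pdivlMr // mulrC; lra.
  have b1 : q.2 - r0 <= E / d by apply: (lem_div d0 _ E0 hX); lra.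
  have b2 : r0 - p.2 <= E / d.
    apply: (lem_div d0 (X := q.2 - r0) _ E0); first lra.
    by rewrite mulrC.
  have hV' : (q.2 - r0) * p.1 + (r0 - p.2) * q.1 <= V0 * (q.2 - p.2).
    by rewrite -ler_pdivrMr //; lra.
  have hq := HK _ Sq; have hp := HK _ Sp.
  have e1 : 0 <= (r0 - p.2) * (q.1 - K0) by apply: mulr_ge0; lra.
  have e2 : 0 <= (q.2 - r0) * (p.1 - K0) by apply: mulr_ge0; lra.
  have f1 : (V0 - K0) * (r0 - p.2) <= (V0 - K0) * (E / d) by apply: ler_wpM2l => //; lra.
  have f2 : (V0 - K0) * (q.2 - r0) <= (V0 - K0) * (E / d) by apply: ler_wpM2l => //; lra.
  have g1 : p.1 - V0 <= (V0 - K0) * (E / d) / d.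
    apply: (lem_div d0 (X := q.2 - r0)); first lra.
      by apply: mulr_ge0 => //; lra.
    nra.
  have g2 : q.1 - V0 <= (V0 - K0) * (E / d) / d.
    apply: (lem_div d0 (X := r0 - p.2)); first lra.
      by apply: mulr_ge0 => //; lra.
    nra.
  split; split => //; split; rewrite /B; try lra; rewrite ler_norml; apply/andP; split; lra.
pose Pset := [set pi | adm pi /\ V pi <= V0].
have Pfin : finite_set Pset.
  apply: (@sub_finite_set _ Pset (box `*` box)).
    by move=> pi [h1 h2]; exact: bound.
  by apply: finite_setX; exact: (HF B).
have [pis [[admS VS] minS]] := @finite_min _ _ Pset V Pfin (ex_intro _ pi0 (conj adm0 (lexx V0))).
set mu := V pis.
have muall : forall pi, adm pi -> mu <= V pi.
  move=> pi api; case: (leP (V pi) V0) => h; first by apply: minS.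
  rewrite /mu; lra.
have muK : K0 <= mu.
  have h1 := chord _ admS; have h2 := admprod _ admS; rewrite -/mu in h1.
  have : 0 <= a * ((r0 - pis.1.2) * (pis.2.2 - r0)) by apply: mulr_ge0 => //; lra.
  have := PK r0; lra.
have Heq : forall s, S s -> s.2 = r0 -> mu <= s.1.
  move=> s Ss h; have := muall (s, s) (And3 Ss Ss (or_intror (conj erefl h))).
  by rewrite /V /= h ltxx.
have Hpair : forall p q, S p -> S q -> p.2 < r0 -> r0 < q.2 ->
     mu * (q.2 - p.2) <= (q.2 - r0) * p.1 + (r0 - p.2) * q.1.
  move=> p q Sp Sq hp hq; have := muall (p, q) (And3 Sp Sq (or_introl (conj hp hq))).
  by rewrite /V /= hp ler_pdivlMr //; lra.
have [sigma Hmain] := slope_lemma d0 muK HK Hd Heq Hpair.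
have mun0 : mu <= n0.
  have := hp_closure ler01 Hmain _ cx; rewrite -/r0 -/n0; lra.
have -> : x = (n0, r0) by rewrite /n0 /r0; case: (x).
case: admS => Sp Sq hpq.
exact: (rep_lemma Sp Sq hpq erefl mun0).
Qed.

Lemma segpt_same (R : realType) (y : R * R) t : segpt y y t = y.
Proof. by case: y => y1 y2; rewrite /segpt /=; congr pair; ring. Qed.

Lemma sum_ind (R : realType) k (j : 'I_k) (g : 'I_k -> R) :
  \sum_(i < k) (if i == j then 1 else 0) * g i = g j.
Proof.
rewrite (bigD1 j) //= eqxx mul1r big1 ?addr0 // => i /negPf ->; exact: mul0r.
Qed.

Lemma ext_in_S (R : realType) (P : set (R * R)) x :
  extreme_point (conv_dir P) x -> P x.
Proof.
move=> [[k [p [al [be [Pp al0 s1 be0 ex]]]]] Hext].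
apply: contrapT => nPx.
case: (ltP 0 be) => hbe.
  pose y := rep p al 0; pose z := rep p al (2 * be).
  have yz : y <> z by move=> /(congr1 fst) /=; lra.
  have seg : forall t, segpt y z t = rep p al (t * (2 * be)).
    move=> t; rewrite /y /z segpt_rep; congr rep; last by ring.
    by apply: funext => i; ring.
  apply: (Hext y z yz _ (1 / 2)).
  - move=> t /andP[t0 t1]; rewrite seg.
    exists k, p, al, (t * (2 * be)); split => //; apply: mulr_ge0 => //; lra.
  - apply/andP; split; lra.
  - by rewrite seg ex; congr rep; field.
have be00 : be = 0 by apply/eqP; rewrite eq_le hbe be0.
have [j alj] : exists j, al j != 0.
  apply: contrapT => hn.
  have : \sum_(i < k) al i = 0.
    by apply: big1 => i _; apply: contrapT => h; apply: hn; exists i; apply/eqP.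
  rewrite s1; apply/eqP; exact: oner_neq0.
have alj0 : 0 < al j by rewrite lt_neqAle eq_sym alj al0.
have hpj : p j <> x by move=> e; apply: nPx; rewrite -e.
have rest : \sum_(i < k | i != j) al i = 1 - al j.
  by rewrite -s1 [in RHS](bigD1 j) //=; lra.
have rest0 : 0 <= \sum_(i < k | i != j) al i by apply: sumr_ge0.
have alj1 : al j < 1.
  rewrite lt_neqAle; apply/andP; split; last lra.
  apply/negP => /eqP e1; apply: hpj.
  have r0 : forall i, i != j -> al i = 0.
    move=> i ij; move: rest; rewrite e1 subrr => /eqP.
    rewrite psumr_eq0 // => /allP h; apply/eqP.
    by have := h i; rewrite mem_index_enum ij /= => /(_ isT).
  have hs : forall g : 'I_k -> R, \sum_(i < k) al i * g i = g j.
    move=> g; rewrite (bigD1 j) //= e1 mul1r big1 ?addr0 // => i ij.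
    by rewrite r0 // mul0r.
  have h1 := hs (fun i => (p i).1); have h2 := hs (fun i => (p i).2).
  simpl in h1, h2.
  by rewrite ex be00 /rep h1 h2 addr0; case: (p j).
pose al' := fun i => (al i - (if i == j then al j else 0)) / (1 - al j).
pose q := rep p al' 0.
pose dl := fun i : 'I_k => if i == j then 1 else (0 : R).
have pjrep : p j = rep p dl 0.
  by rewrite /rep !sum_ind addr0; case: (p j).
have sal' : \sum_(i < k) al' i = 1.
  rewrite /al' -mulr_suml sumrB s1.
  have -> : \sum_(i < k) (if i == j then al j else 0) = al j.
    by rewrite (bigD1 j) //= eqxx big1 ?addr0 // => i /negPf ->.
  by rewrite divff //; lra.
have al'0 : forall i, 0 <= al' i.
  move=> i; rewrite /al'; apply: divr_ge0; last lra.
  by case: eqP => [->|_]; rewrite ?subrr ?subr0.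
have seg : forall t, segpt q (p j) t = rep p (fun i => (1 - t) * al' i + t * dl i) 0.
  by move=> t; rewrite pjrep /q segpt_rep; congr rep; ring.
have xe : x = segpt q (p j) (al j).
  rewrite seg ex be00; congr rep; apply: funext => i.
  rewrite /al' /dl; case: eqP => [->|_]; field; lra.
have qpj : q <> p j by move=> e; apply: hpj; rewrite xe e segpt_same.
apply: (Hext q (p j) qpj _ (al j)); last by [].
- move=> t /andP[t0 t1]; rewrite seg.
  exists k, p, (fun i => (1 - t) * al' i + t * dl i), 0; split => //.
  + move=> i; apply: addr_ge0; apply: mulr_ge0 => //; try lra.
    by rewrite /dl; case: eqP.
  + rewrite big_split /= -!mulr_sumr sal'.
    have -> : \sum_(i < k) dl i = 1.
      by rewrite /dl (bigD1 j) //= eqxx big1 ?addr0 // => i /negPf ->.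
    ring.
- by apply/andP.
Qed.

Lemma lattice_gap (R : realType) (N : nat) (r0 : R) : (0 < N)%N ->
  exists2 d : R, 0 < d & forall k : int,
    (k%:~R / N%:R < r0 -> k%:~R / N%:R + d <= r0) /\
    (r0 < k%:~R / N%:R -> r0 + d <= k%:~R / N%:R).
Proof.
move=> N0; have Nr : 0 < (N%:R : R) by rewrite ltr0n.
set y := r0 * N%:R.
pose d1 := y - (Num.ceil y - 1)%:~R.
pose d2 := (Num.floor y + 1)%:~R - y.
have d10 : 0 < d1 by rewrite /d1 subr_gt0 ceilB1_lt.
have d20 : 0 < d2 by rewrite /d2 subr_gt0 floorD1_gt.
exists (Num.min d1 d2 / N%:R); first by apply: divr_gt0 => //; rewrite lt_min d10.
have m1 := ge_min d1 d2; have m1' : Num.min d1 d2 <= d1 by rewrite ge_min lexx.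
have m2' : Num.min d1 d2 <= d2 by rewrite ge_min lexx orbT.
move=> k; split.
  rewrite ltr_pdivrMr // -/y => hk.
  rewrite -mulrDl ler_pdivrMr // -/y.
  have : k < Num.ceil y by rewrite ceil_gt_int.
  move=> hk2; have hk3 : k + 1 <= Num.ceil y by rewrite lezD1.
  have : ((k + 1)%:~R : R) <= (Num.ceil y)%:~R by rewrite ler_int.
  have e1 : ((k + 1)%:~R : R) = k%:~R + 1 by rewrite intrD.
  have e2 : d1 = y - (Num.ceil y)%:~R + 1.
    have e3 : ((Num.ceil y - 1)%:~R : R) = (Num.ceil y)%:~R - 1 by rewrite intrB.
    by rewrite /d1 e3; lra.
  rewrite e1; lra.
rewrite ltr_pdivlMr // -/y => hk.
rewrite -[r0](mulfK (lt0r_neq0 Nr)) -mulrDl ler_pdivlMr // divfK ?(lt0r_neq0 Nr) // -/y.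
have : Num.floor y < k by rewrite floor_lt_int.
move=> hk2; have hk3 : Num.floor y + 1 <= k by rewrite lezD1.
have : ((Num.floor y + 1)%:~R : R) <= k%:~R by rewrite ler_int.
have e1 : ((Num.floor y + 1)%:~R : R) = (Num.floor y)%:~R + 1 by rewrite intrD.
have e2 : d2 = (Num.floor y)%:~R + 1 - y by rewrite /d2 e1.
rewrite e1; lra.
Qed.

Lemma int_bound (R : realType) (a : int) (M : nat) :
  `|(a%:~R : R)| < M%:R -> (absz a <= M)%N.
Proof.
rewrite -intr_norm => h.
have h2 : `|a| < M%:Z.
  by rewrite -(ltr_int R); move: h; rewrite -[M%:R]/((M%:Z)%:~R).
lia.
Qed.
Lemma supp_box_finite (R : realType) (N : nat) (f : coeffs R) (K0 : R) : (0 < N)%N ->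
  (forall s, supp N f s -> K0 <= s.1) ->
  forall B, finite_set [set s | supp N f s /\ s.1 <= B /\ `|s.2| <= B].
Proof.
move=> N0 HK B; have Nr : 0 < (N%:R : R) by rewrite ltr0n.
pose X := `|B| + `|K0|.
have X0 : 0 <= X * N%:R by apply: mulr_ge0; [apply: addr_ge0|apply: ltW].
pose M := Num.bound (X * N%:R).
have hM : X * N%:R < M%:R by apply: archi_boundP.
pose g := fun ab : int * int => ((ab.1%:~R / N%:R : R), (ab.2%:~R / N%:R : R)).
apply: (@sub_finite_set _ _ (g @` ([set k : int | (absz k <= M)%N] `*` [set k : int | (absz k <= M)%N]))); last first.
  by apply: finite_image; apply: finite_setX; apply: finite_intbox.
move=> s [Ss [h1 h2]]; have hK := HK _ Ss.
case: Ss => a [b [es fab]]; rewrite es /= in h1 h2 hK.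
exists (a, b); last by rewrite es.
have nB := ler_norm B; have nK : - `|K0| <= K0 by rewrite lerNl -normrN ler_norm.
have nK0 := normr_ge0 K0; have nB0 := normr_ge0 B.
have key : forall z : int, `|(z%:~R / N%:R : R)| <= X -> (absz z <= M)%N.
  move=> z hz; apply: (@int_bound R).
  apply: le_lt_trans hM.
  have -> : (z%:~R : R) = z%:~R / N%:R * N%:R by rewrite divfK // lt0r_neq0.
  by rewrite normrM (gtr0_norm Nr) ler_pM2r.
split; apply: key; rewrite /X.
  rewrite ler_norml; apply/andP; split; lra.
lra.
Qed.

Theorem lemma4p4 (R : realType) (N : nat) (f : coeffs R) :
  (0 < N)%N -> in_RJ N f -> (exists a b : int, f a b != 0) ->
  (forall x, extreme_point (nuJ N f) x -> supp N f x) /\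
  nuJ N f = closure (conv_dir (supp N f)) /\
  closure (conv_dir (supp N f)) = conv_dir (supp N f).
Proof.
move=> N0 [_ [a [b [c [a0 Hpar]]]]] _.
have HP : forall s, supp N f s -> a * s.2 ^+ 2 + b * s.2 + c <= s.1.
  by move=> s Ss; exact: Hpar.
have HK : forall s, supp N f s -> c - b ^+ 2 / (4 * a) <= s.1.
  by move=> s Ss; exact: le_trans (parab_lb a b c s.2 a0) (HP _ Ss).
have HL : forall r0 : R, exists2 d : R, 0 < d & forall s, supp N f s ->
      (s.2 < r0 -> s.2 + d <= r0) /\ (r0 < s.2 -> r0 + d <= s.2).
  move=> r0; have [d d0 Hd] := @lattice_gap R N r0 N0.
  by exists d => // s [k [l [-> _]]] /=; exact: Hd.
have HF := @supp_box_finite R N f _ N0 HK.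
have Hcl : closure (conv_dir (supp N f)) = conv_dir (supp N f).
  apply/seteqP; split; first exact: (@closed_main R _ a b c a0 HP HL HF).
  exact: subset_closure.
split; last by split.
by move=> x; rewrite /nuJ Hcl => /(@ext_in_S R _ x).
Qed.
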